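(* Let $(u,x)$ and $(u,y)$ be Burge words with the same top row $u$. If $x\sim y$, then $\Gamma(u,x)=\Gamma(u,y)$.
   Context: $\mathrm{Cay}_n$ is the set of Cayley permutations of length $n$ (words of positive integers in which every integer from $1$ to the maximum occurs), $\mathrm{WI}_n$ its weakly increasing elements. For $(u,v)\in\mathrm{WI}_n\times\mathrm{Cay}_n$, viewed as a biword with columns $\binom{u(i)}{v(i)}$, the Burge transpose $(u,v)^T$ turns each column $\binom{a}{b}$ into $\binom{b}{a}$ and sorts the columns increasingly by top entry, ties by decreasing bottom entry. With weak descent set $\mathrm{Des}(v)=\{i:v(i)\ge v(i+1)\}$, the Burge words of length $n$ are the pairs $(u,v)\in\mathrm{WI}_n\times\mathrm{Cay}_n$ with $\mathrm{Des}(u)\subseteq\mathrm{Des}(v)$. $\Gamma(u,v)$ denotes the bottom row of $(u,v)^T$. For $x\in\mathrm{Cay}_n$, $\gamma(x)=\Gamma(1\,2\cdots n,\,x)$, and $x\sim y$ iff $\gamma(x)=\gamma(y)$. *)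

(* Defs.v *)
From mathcomp Require Import all_boot.
Set Implicit Arguments. Unset Strict Implicit. Unset Printing Implicit Defensive.

Definition wmax (v : seq nat) : nat := foldr maxn 0 v.

Definition cayley (n : nat) (v : seq nat) : bool :=
  [&& size v == n, all (fun a => 0 < a) v & all (fun k => k \in v) (iota 1 (wmax v))].

Definition weakly_incr_cayley (n : nat) (u : seq nat) : bool :=
  cayley n u && sorted leq u.

(* weak descent set, 1-indexed: i in Des v iff 1 <= i < size v and v(i) >= v(i+1)
   (here v(i) = nth 0 v i.-1) *)
Definition wdes (v : seq nat) : seq nat :=
  [seq i <- iota 1 (size v).-1 | nth 0 v i.-1 >= nth 0 v i].

Definition burge_word (n : nat) (u v : seq nat) : bool :=
  [&& weakly_incr_cayley n u, cayley n v & all (fun i => i \in wdes v) (wdes u)].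

Definition col_le (c d : nat * nat) : bool :=
  (c.1 < d.1) || ((c.1 == d.1) && (d.2 <= c.2)).

Definition burge_transpose (u v : seq nat) : seq (nat * nat) :=
  sort col_le (zip v u).

Definition Gamma (u v : seq nat) : seq nat := map snd (burge_transpose u v).

Definition gamma (x : seq nat) : seq nat := Gamma (iota 1 (size x)) x.

Definition gamma_equiv (x y : seq nat) : Prop := gamma x = gamma y.

(* Main.v *)
Require Import Defs.
From mathcomp Require Import all_boot.
From mathcomp Require Import zify.

Lemma col_le_trans : transitive col_le.
Proof.
move=> [a b] [c d] [e f]; rewrite /col_le /=.
case/orP=> [h1|/andP[/eqP h1 h2]]; case/orP=> [h3|/andP[/eqP h3 h4]];
  apply/orP; lia.
Qed.

Lemma col_le_total : total col_le.
Proof. move=> [a b] [c d]; rewrite /col_le /=; apply/orP; lia. Qed.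

Lemma col_le_anti : antisymmetric col_le.
Proof.
move=> [a b] [c d]; rewrite /col_le /= => /andP[h1 h2].
have [e1 e2] : a = c /\ b = d.
  move: h1 h2; case/orP=> [h|/andP[/eqP h h']]; case/orP=> [g|/andP[/eqP g g']]; lia.
by rewrite e1 e2.
Qed.

Lemma Gamma_gamma (u x : seq nat) :
  sorted leq u -> size u = size x ->
  Gamma u x = map (fun i => nth 0 u i.-1) (gamma x).
Proof.
move=> su sz.
set f := fun i => nth 0 u i.-1.
set n := size x.
set s := zip x (iota 1 n).
set h := fun p : nat * nat => (p.1, f p.2).
have eu : u = map f (iota 1 n).
  apply: (@eq_from_nth _ 0); first by rewrite size_map size_iota.
  move=> i; rewrite sz => hi.
  by rewrite (nth_map 0) ?size_iota // nth_iota.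
have ezip : zip x u = map h s.
  rewrite eu /s /h /n; elim: (x) (1) => [|a l IH] k //=.
  by rewrite IH.
have allP : all (fun p : nat * nat => (0 < p.2) && (p.2 <= n)) s.
  apply/allP => -[a b] hp0.
  have hp : b \in unzip2 s by apply: (map_f snd hp0).
  move: hp; rewrite /s unzip2_zip ?size_iota //; rewrite mem_iota => /andP[h1 h2]; apply/andP; split; [exact h1| by rewrite -ltnS -add1n].
have fmono : {in [pred p : nat * nat | (0 < p.2) && (p.2 <= n)] &,
               {homo h : p q / col_le p q >-> col_le p q}}.
  move=> [a b] [c d]; rewrite !inE /= => /andP[b0 bn] /andP[d0 dn].
  rewrite /col_le /h /=; case/orP=> [->//|/andP[-> hdb]]; apply/orP; right.
  rewrite /f /=.
  have := @sorted_leq_nth _ leq leq_trans leqnn 0 u su d.-1 b.-1.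
  rewrite !inE sz -/n; apply; lia.
have E : sort col_le (map h s) = map h (sort col_le s).
  apply: (sorted_eq col_le_trans col_le_anti).
  - exact: sort_sorted col_le_total _.
  - apply: homo_sorted_in fmono _ _; last exact: sort_sorted col_le_total _.
    by rewrite all_sort.
  - by rewrite perm_sort perm_map // perm_sym perm_sort.
rewrite /Gamma /burge_transpose ezip E /gamma /Gamma /burge_transpose -/n -/s.
by rewrite -!map_comp.
Qed.

Theorem lemma4p13 (n : nat) (u x y : seq nat) :
  burge_word n u x -> burge_word n u y -> gamma_equiv x y ->
  Gamma u x = Gamma u y.
Proof.
rewrite /burge_word /weakly_incr_cayley /cayley.
move=> /and3P[/andP[/and3P[/eqP su _ _] so] /and3P[/eqP sx _ _] _].
move=> /and3P[_ /and3P[/eqP sy _ _] _] E.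
rewrite !Gamma_gamma //; first by rewrite E.
- by rewrite su sy.
- by rewrite su sx.
Qed.
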